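(* Let $a\in\mathbb{R}$, $w\in\mathbb{C}\setminus\mathbb{R}$ with $\varphi := |\operatorname{Arg}(w)|\in(0,\pi/2]$, and $\tau>0$. Then all roots of $z + a - we^{-\tau z} = 0$ have negative real parts if and only if $$a > 0\quad\text{and}\quad |w| < \frac{1}{\tau}R(-\tau a;\varphi).$$
   Context: $\operatorname{Arg}(w)\in(-\pi,\pi]$ is the principal argument. For $\varphi\in(0,\pi/2]$, $C(\theta;\varphi) := \theta\cot(\theta-\varphi)$ is a strictly decreasing bijection from $[0,\varphi)$ onto $(-\infty,0]$ with inverse $C^{-1}(\cdot;\varphi)$, and $R(r;\varphi) := -C^{-1}(r;\varphi)/\sin(C^{-1}(r;\varphi)-\varphi)$ for $r\le0$. *)

(* Defs.v *)
From Stdlib Require Import Reals ClassicalEpsilon.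
From Coquelicot Require Import Coquelicot.
Open Scope R_scope.

Definition Cexp (z : C) : C :=
  (exp (Re z) * cos (Im z), exp (Re z) * sin (Im z)).

(* principal argument Arg w in (-pi, pi] (for w <> 0) *)
Definition Arg (w : C) : R :=
  if Rle_dec 0 (Im w) then acos (Re w / Cmod w) else - acos (Re w / Cmod w).

Definition cot (x : R) : R := cos x / sin x.

Definition Cfun (theta phi : R) : R := theta * cot (theta - phi).

(* inverse of C(.;phi) : [0,phi) -> (-oo,0], chosen by description
   (it is a bijection for phi in (0, pi/2]) *)
Definition Cinv (r phi : R) : R :=
  epsilon (inhabits 0) (fun theta => 0 <= theta < phi /\ Cfun theta phi = r).

Definition Rfun (r phi : R) : R :=
  - Cinv r phi / sin (Cinv r phi - phi).

(* Main.v *)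
Require Import Defs.
From Stdlib Require Import Reals Lra Psatz ClassicalEpsilon Ranalysis5.
From Coquelicot Require Import Coquelicot.
Open Scope R_scope.

Definition Dfun (phi t : R) : R := t * cos (phi - t) / sin (phi - t).

Lemma cont_D phi t : sin (phi - t) <> 0 -> continuity_pt (Dfun phi) t.
Proof.
  intros H. apply continuity_pt_filterlim. apply (ex_derive_continuous (Dfun phi) t).
  unfold Dfun. auto_derive. auto.
Qed.

Lemma Cfun_D phi t : sin (phi - t) <> 0 -> Cfun t phi = - Dfun phi t.
Proof.
  intros H. unfold Cfun, cot, Dfun.
  replace (t - phi) with (- (phi - t)) by ring.
  rewrite cos_neg, sin_neg. field. auto.
Qed.

Lemma sin_pos_phi phi t : 0 < phi <= PI/2 -> t < phi -> phi - t < PI -> 0 < sin (phi - t).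
Proof. intros. apply sin_gt_0; lra. Qed.

Lemma D_incr phi t1 t2 : 0 < phi <= PI/2 -> 0 <= t1 -> t1 < t2 -> t2 < phi ->
  Dfun phi t1 < Dfun phi t2.
Proof.
  intros Hphi H1 H12 H2. pose proof PI_RGT_0.
  set (u1 := phi - t1). set (u2 := phi - t2).
  assert (s1 : 0 < sin u1) by (apply sin_gt_0; unfold u1; lra).
  assert (s2 : 0 < sin u2) by (apply sin_gt_0; unfold u2; lra).
  assert (c1 : 0 <= cos u1) by (apply cos_ge_0; unfold u1; lra).
  assert (c2 : 0 <= cos u2) by (apply cos_ge_0; unfold u2; lra).
  assert (sd : 0 < sin (u1 - u2)) by (apply sin_gt_0; unfold u1, u2; lra).
  rewrite sin_minus in sd.
  assert (E1 : Dfun phi t1 = t1 * cos u1 * sin u2 / (sin u1 * sin u2)) by (unfold Dfun; fold u1; field; lra).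
  assert (E2 : Dfun phi t2 = t2 * cos u2 * sin u1 / (sin u1 * sin u2)) by (unfold Dfun; fold u2; field; lra).
  rewrite E1, E2. unfold Rdiv. apply Rmult_lt_compat_r.
  - apply Rinv_0_lt_compat; nra.
  - assert (0 <= cos u1 * sin u2) by nra.
    assert (cos u1 * sin u2 < cos u2 * sin u1) by nra.
    nra.
Qed.

Lemma D_0 phi : Dfun phi 0 = 0.
Proof. unfold Dfun. lra. Qed.

Lemma D_large phi A : 0 < phi <= PI/2 -> 0 < A -> exists t, 0 < t < phi /\ A < Dfun phi t.
Proof.
  intros Hphi HA. pose proof PI_RGT_0.
  set (k := phi / 2 * cos (phi / 2)).
  assert (Hc : 0 < cos (phi/2)) by (apply cos_gt_0; lra).
  assert (Hk : 0 < k) by (unfold k; nra).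
  set (u := Rmin (phi/2) (k / (2 * A))).
  assert (Hu0 : 0 < u) by (unfold u; apply Rmin_glb_lt; [lra| apply Rdiv_lt_0_compat; lra]).
  assert (Hu1 : u <= phi/2) by apply Rmin_l.
  assert (Hu2 : u <= k / (2*A)) by apply Rmin_r.
  exists (phi - u). split; [lra|].
  unfold Dfun. replace (phi - (phi - u)) with u by ring.
  assert (Hs : 0 < sin u) by (apply sin_gt_0; lra).
  assert (Hsu : sin u < u) by (apply sin_lt_x; lra).
  assert (Hcu : cos (phi/2) <= cos u).
  { destruct (Req_dec u (phi/2)) as [->|Hne]; [lra|].
    left; apply cos_decreasing_1; lra. }
  assert (Hnum : k <= (phi - u) * cos u).
  { unfold k. apply Rmult_le_compat; lra. }
  assert (HuA : 2 * A * u <= k).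
  { apply (Rmult_le_compat_l (2*A)) in Hu2; [|lra].
    replace (2 * A * (k / (2*A))) with k in Hu2 by (field; lra). lra. }
  apply (Rmult_lt_reg_r (sin u)); [lra|].
  unfold Rdiv. rewrite Rmult_assoc, Rinv_l, Rmult_1_r by lra.
  nra.
Qed.

Lemma D_exists phi A : 0 < phi <= PI/2 -> 0 < A -> exists t, 0 < t < phi /\ Dfun phi t = A.
Proof.
  intros Hphi HA. pose proof PI_RGT_0.
  destruct (D_large phi A Hphi HA) as [t1 [Ht1 HA1]].
  destruct (IVT_interv (fun t => Dfun phi t - A) 0 t1) as [t [Ht Heq]].
  - intros b Hb. apply continuity_pt_minus; [apply cont_D|apply continuity_pt_const; intros ? ?; reflexivity].
    assert (0 < sin (phi - b)) by (apply sin_gt_0; lra). lra.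
  - lra.
  - rewrite D_0. lra.
  - lra.
  - exists t. destruct (Req_dec t 0) as [->|Hne].
    + rewrite D_0 in Heq; lra.
    + split; [lra|lra].
Qed.

Lemma Cinv_spec phi A : 0 < phi <= PI/2 -> 0 < A ->
  0 < Defs.Cinv (-A) phi < phi /\ Dfun phi (Defs.Cinv (-A) phi) = A.
Proof.
  intros Hphi HA. pose proof PI_RGT_0.
  assert (Hs : 0 <= Defs.Cinv (-A) phi < phi /\ Cfun (Defs.Cinv (-A) phi) phi = -A).
  { unfold Defs.Cinv. apply epsilon_spec.
    destruct (D_exists phi A Hphi HA) as [t [Ht HD]].
    exists t. split; [lra|]. rewrite Cfun_D.
    - rewrite HD; ring.
    - assert (0 < sin (phi - t)) by (apply sin_gt_0; lra). lra. }
  destruct Hs as [Hb HC]. rewrite Cfun_D in HC.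
  2: { assert (0 < sin (phi - Defs.Cinv (-A) phi)) by (apply sin_gt_0; lra). lra. }
  assert (HD : Dfun phi (Defs.Cinv (-A) phi) = A) by lra.
  split; [|exact HD].
  split; [|lra]. destruct (Req_dec (Defs.Cinv (-A) phi) 0) as [He|]; [|lra].
  rewrite He, D_0 in HD. lra.
Qed.

Lemma Rfun_val phi A : 0 < phi <= PI/2 -> 0 < A ->
  let th := Defs.Cinv (-A) phi in
  0 <= Rfun (-A) phi /\ Rfun (-A) phi = th / sin (phi - th) /\
  Rfun (-A) phi ^ 2 = A ^ 2 + th ^ 2.
Proof.
  intros Hphi HA th. pose proof PI_RGT_0.
  destruct (Cinv_spec phi A Hphi HA) as [Hb HD]. fold th in Hb, HD.
  assert (Hs : 0 < sin (phi - th)) by (apply sin_gt_0; lra).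
  assert (E : Rfun (-A) phi = th / sin (phi - th)).
  { unfold Rfun. fold th. replace (th - phi) with (- (phi - th)) by ring.
    rewrite sin_neg. field. lra. }
  split; [rewrite E; apply Rdiv_le_0_compat; lra|]. split; [exact E|].
  rewrite E. rewrite <- HD. unfold Dfun.
  pose proof (sin2_cos2 (phi - th)). unfold Rsqr in H0.
  set (s := sin (phi - th)) in *. set (c := cos (phi - th)) in *.
  replace ((th / s) ^ 2) with (th^2 * (s*s + c*c) / s^2) by (rewrite H0; field; lra). field. lra.
Qed.

Lemma core2 phi b X Y rho : 0 < phi <= PI/2 -> 0 < b -> 0 <= X -> 0 <= rho ->
  X + b = rho * cos (phi - Y) -> Y = rho * sin (phi - Y) -> Rfun (-b) phi <= rho.
Proof.
  intros Hphi Hb HX Hr E1 E2. pose proof PI_RGT_0.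
  destruct (Rfun_val phi b Hphi Hb) as [HR0 [_ HR2]].
  destruct (Cinv_spec phi b Hphi Hb) as [Hth HD].
  set (th := Defs.Cinv (-b) phi) in *.
  assert (Hrho2 : rho ^ 2 = (X + b) ^ 2 + Y ^ 2).
  { rewrite E1. rewrite E2 at 2. pose proof (sin2_cos2 (phi - Y)). unfold Rsqr in H0.
    replace ((rho * cos (phi - Y)) ^ 2 + (rho * sin (phi - Y)) ^ 2) with
      (rho^2 * (sin (phi - Y) * sin (phi - Y) + cos (phi - Y) * cos (phi - Y))) by ring.
    rewrite H0. ring. }
  assert (HY : th ^ 2 <= Y ^ 2).
  { destruct (Rle_dec phi Y) as [H1|H1]; [nra|].
    destruct (Rle_dec Y (-phi)) as [H2|H2]; [nra|].
    destruct (Rle_dec Y 0) as [H3|H3].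
    - assert (0 < sin (phi - Y)) by (apply sin_gt_0; lra).
      assert (rho <> 0) by (intro Hz; rewrite Hz in E1; lra).
      nra.
    - destruct (Rle_dec th Y) as [H4|H4]; [nra|].
      assert (Hs : 0 < sin (phi - Y)) by (apply sin_gt_0; lra).
      assert (DY : Dfun phi Y = X + b).
      { unfold Dfun. rewrite E1. rewrite E2 at 1. field. lra. }
      pose proof (D_incr phi Y th Hphi ltac:(lra) ltac:(lra) ltac:(lra)). lra. }
  assert (Rfun (-b) phi ^ 2 <= rho ^ 2) by nra.
  destruct (Rle_dec (Rfun (-b) phi) rho) as [|Hn]; [assumption|]. nra.
Qed.

Lemma cont_h phi b K t : sin (phi - t) <> 0 ->
  continuity_pt (fun y => y / sin (phi - y) - K * exp (- (Dfun phi y - b))) t.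
Proof.
  intros H. apply continuity_pt_filterlim.
  apply (ex_derive_continuous (fun y => y / sin (phi - y) - K * exp (- (Dfun phi y - b))) t).
  unfold Dfun. auto_derive. repeat split; auto.
Qed.

Lemma core1 phi b K y0 : 0 < phi <= PI/2 -> 0 < K -> 0 <= y0 < phi ->
  0 <= Dfun phi y0 - b -> y0 / sin (phi - y0) <= K * exp (- (Dfun phi y0 - b)) ->
  exists Y, y0 <= Y < phi /\ 0 <= Dfun phi Y - b /\
    Dfun phi Y = K * exp (- (Dfun phi Y - b)) * cos (phi - Y) /\
    Y = K * exp (- (Dfun phi Y - b)) * sin (phi - Y).
Proof.
  intros Hphi HK Hy0 HX0 Hh0. pose proof PI_RGT_0.
  assert (fin : forall Y, y0 <= Y < phi -> Y / sin (phi - Y) = K * exp (- (Dfun phi Y - b)) ->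
    exists Y, y0 <= Y < phi /\ 0 <= Dfun phi Y - b /\
    Dfun phi Y = K * exp (- (Dfun phi Y - b)) * cos (phi - Y) /\
    Y = K * exp (- (Dfun phi Y - b)) * sin (phi - Y)).
  { intros Y HY Heq. exists Y. split; [exact HY|].
    assert (Hs : 0 < sin (phi - Y)) by (apply sin_gt_0; lra).
    split.
    - destruct (Req_dec Y y0) as [->|Hne]; [lra|].
      pose proof (D_incr phi y0 Y Hphi ltac:(lra) ltac:(lra) ltac:(lra)). lra.
    - rewrite <- Heq. unfold Dfun. split; field; lra. }
  destruct (Req_dec (y0 / sin (phi - y0)) (K * exp (- (Dfun phi y0 - b)))) as [He|Hne].
  { apply (fin y0); [lra|exact He]. }
  set (d := Rmin ((phi - y0)/2) (phi / (2 * (1 + K)))).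
  assert (Hd0 : 0 < d) by (unfold d; apply Rmin_glb_lt; apply Rdiv_lt_0_compat; lra).
  assert (Hd1 : d <= (phi - y0)/2) by apply Rmin_l.
  assert (Hd2 : d <= phi / (2 * (1+K))) by apply Rmin_r.
  set (y1 := phi - d).
  assert (Hy1 : y0 < y1 < phi) by (unfold y1; lra).
  destruct (IVT_interv (fun y => y / sin (phi - y) - K * exp (- (Dfun phi y - b))) y0 y1) as [Y [HY Heq]].
  - intros t Ht. apply cont_h. assert (0 < sin (phi - t)) by (apply sin_gt_0; lra). lra.
  - lra.
  - lra.
  - assert (Hs : sin (phi - y1) < phi - y1) by (apply sin_lt_x; lra).
    assert (Hs0 : 0 < sin (phi - y1)) by (apply sin_gt_0; lra).
    pose proof (D_incr phi y0 y1 Hphi ltac:(lra) ltac:(lra) ltac:(lra)).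
    assert (exp (- (Dfun phi y1 - b)) <= 1).
    { rewrite <- exp_0. destruct (Req_dec (Dfun phi y1 - b) 0) as [E|E].
      - rewrite E; replace (-0) with 0 by ring; lra.
      - left; apply exp_increasing; lra. }
    assert (HdK : 2 * (1 + K) * d <= phi).
    { apply (Rmult_le_compat_l (2*(1+K))) in Hd2; [|lra].
      replace (2 * (1 + K) * (phi / (2 * (1 + K)))) with phi in Hd2 by (field; lra). lra. }
    assert (K < y1 / sin (phi - y1)).
    { apply (Rmult_lt_reg_r (sin (phi - y1))); [lra|].
      unfold Rdiv. rewrite Rmult_assoc, Rinv_l, Rmult_1_r by lra.
      unfold y1 in *. nra. }
    nra.
  - apply (fin Y); [lra|lra].
Qed.
Lemma eq_comp (a tau x y c d : R) :
  (((x,y) : C) + RtoC a - ((c,d) : C) * Cexp (RtoC (- tau) * (x,y)))%C = RtoC 0 <->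
  (x + a - (c * exp (- tau * x) * cos (- tau * y) - d * exp (- tau * x) * sin (- tau * y)) = 0 /\
   y - (c * exp (- tau * x) * sin (- tau * y) + d * exp (- tau * x) * cos (- tau * y)) = 0).
Proof.
  unfold Cexp, RtoC, Cminus, Cplus, Copp, Cmult, Re, Im; simpl.
  replace (- tau * x - 0 * y) with (- tau * x) by ring.
  replace (- tau * y + 0 * x) with (- tau * y) by ring.
  split.
  - intros H. injection H. intros H1 H2. split.
    + lra.
    + lra.
  - intros [H1 H2]. f_equal.
    + lra.
    + lra.
Qed.

Lemma arg_facts (w : C) : Im w <> 0 ->
  0 < Cmod w /\ Re w = Cmod w * cos (Rabs (Arg w)) /\ Rabs (Im w) = Cmod w * sin (Rabs (Arg w)).
Proof.
  intros Hd. destruct w as [c d]. unfold Re, Im in *; simpl in *.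
  assert (Hm2 : Cmod (c,d) ^ 2 = c ^ 2 + d ^ 2).
  { unfold Cmod; simpl. rewrite !Rmult_1_r. rewrite sqrt_sqrt; [ring|nra]. }
  assert (Hm0 : 0 <= Cmod (c,d)) by apply Cmod_ge_0.
  assert (Hm : 0 < Cmod (c,d)) by (destruct Hm0 as [|E]; [auto| rewrite <- E in Hm2; nra]).
  set (m := Cmod (c,d)) in *.
  assert (Hb : -1 <= c / m <= 1).
  { split; apply (Rmult_le_reg_r m); try lra; unfold Rdiv; rewrite Rmult_assoc, Rinv_l, Rmult_1_r by lra; nra. }
  assert (HA : Rabs (Arg (c,d)) = acos (c / m)).
  { pose proof (acos_bound (c/m)). unfold Arg, Re, Im; simpl. fold m.
    destruct (Rle_dec 0 d).
    - apply Rabs_pos_eq; lra.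
    - rewrite Rabs_Ropp. apply Rabs_pos_eq; lra. }
  rewrite HA. pose proof (acos_bound (c/m)).
  split; [exact Hm|]. rewrite cos_acos by exact Hb. split; [field; lra|].
  assert (Hs : 0 <= sin (acos (c/m))) by (apply sin_ge_0; lra).
  pose proof (sin2_cos2 (acos (c/m))). unfold Rsqr in H0. rewrite cos_acos in H0 by exact Hb.
  assert (E : (m * sin (acos (c / m))) ^ 2 = d ^ 2).
  { replace ((m * sin (acos (c / m))) ^ 2) with (m^2 * (sin (acos (c / m)) * sin (acos (c / m)))) by ring.
    replace (sin (acos (c / m)) * sin (acos (c / m))) with (1 - c/m * (c/m)) by lra.
    replace (m ^ 2 * (1 - c / m * (c / m))) with (m^2 - c^2) by (field; lra). lra. }
  assert (Hu : 0 <= m * sin (acos (c / m))) by (apply Rmult_le_pos; lra).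
  set (u := m * sin (acos (c / m))) in *.
  assert (Ea : Rabs d ^ 2 = d ^ 2) by (rewrite RPow_abs; apply Rabs_pos_eq; nra).
  pose proof (Rabs_pos d).
  assert (Hf : (Rabs d - u) * (Rabs d + u) = 0) by nra.
  apply Rmult_integral in Hf. destruct Hf; nra.
Qed.

Lemma fwd (a tau m phi s c d x y : R) : 0 < tau -> (s = 1 \/ s = -1) ->
  c = m * cos phi -> d = s * (m * sin phi) ->
  x + a - (c * exp (- tau * x) * cos (- tau * y) - d * exp (- tau * x) * sin (- tau * y)) = 0 ->
  y - (c * exp (- tau * x) * sin (- tau * y) + d * exp (- tau * x) * cos (- tau * y)) = 0 ->
  tau * x + tau * a = tau * m * exp (- (tau * x)) * cos (phi - s * (tau * y)) /\
  s * (tau * y) = tau * m * exp (- (tau * x)) * sin (phi - s * (tau * y)).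
Proof.
  intros Ht Hs Hc Hd H1 H2. subst c d.
  replace (- tau * x) with (- (tau * x)) in * by ring.
  replace (- tau * y) with (- (tau * y)) in * by ring.
  rewrite cos_neg, sin_neg in *.
  destruct Hs as [-> | ->].
  - replace (phi - 1 * (tau * y)) with (phi - tau * y) by ring.
    rewrite cos_minus, sin_minus. split; nra.
  - replace (phi - -1 * (tau * y)) with (phi + tau * y) by ring.
    rewrite cos_plus, sin_plus. split; nra.
Qed.

Lemma bwd (a tau m phi s c d X Y x y : R) : 0 < tau -> (s = 1 \/ s = -1) ->
  c = m * cos phi -> d = s * (m * sin phi) -> tau * x = X -> tau * y = s * Y ->
  X + tau * a = tau * m * exp (- X) * cos (phi - Y) ->
  Y = tau * m * exp (- X) * sin (phi - Y) ->
  x + a - (c * exp (- tau * x) * cos (- tau * y) - d * exp (- tau * x) * sin (- tau * y)) = 0 /\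
  y - (c * exp (- tau * x) * sin (- tau * y) + d * exp (- tau * x) * cos (- tau * y)) = 0.
Proof.
  intros Ht Hs Hc Hd Hx Hy H1 H2. subst c d.
  replace (- tau * x) with (- X) by lra.
  replace (- tau * y) with (- (s * Y)) by lra.
  rewrite cos_neg, sin_neg in *.
  rewrite cos_minus, sin_minus in *.
  destruct Hs as [-> | ->].
  - rewrite Rmult_1_l in *. split; apply (Rmult_eq_reg_l tau); try lra; nra.
  - replace (-1 * Y) with (- Y) by ring. rewrite cos_neg, sin_neg.
    split; apply (Rmult_eq_reg_l tau); try lra; nra.
Qed.

Theorem mainTheorem14 (a : R) (w : C) (tau : R) :
  Im w <> 0 ->
  0 < Rabs (Arg w) <= PI / 2 ->
  0 < tau ->
  ((forall z : C,
       (z + RtoC a - w * Cexp (RtoC (- tau) * z))%C = RtoC 0 -> Re z < 0)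
   <->
   (0 < a /\ Cmod w < / tau * Rfun (- tau * a) (Rabs (Arg w)))).
Proof.
  intros Hd Hphi Ht.
  destruct (arg_facts w Hd) as [Hm [Hc Habs]].
  set (phi := Rabs (Arg w)) in *.
  set (m := Cmod w) in *.
  assert (Hs : exists s, (s = 1 \/ s = -1) /\ Im w = s * (m * sin phi)).
  { destruct (Rle_dec 0 (Im w)).
    - exists 1. split; [left; reflexivity|]. rewrite <- Habs, Rabs_pos_eq; lra.
    - exists (-1). split; [right; reflexivity|]. rewrite <- Habs, Rabs_left; lra. }
  destruct Hs as [s [Hs HIm]].
  replace (- tau * a) with (- (tau * a)) by ring.
  pose proof PI_RGT_0.
  destruct w as [c d]. unfold Re, Im in Hc, HIm; simpl in Hc, HIm.
  split.
  - intros Hst.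
    assert (build : forall b Y, b = tau * a -> 0 <= Dfun phi Y - b ->
       Dfun phi Y = tau * m * exp (- (Dfun phi Y - b)) * cos (phi - Y) ->
       Y = tau * m * exp (- (Dfun phi Y - b)) * sin (phi - Y) -> False).
    { intros b Y Hb HX E1 E2.
      set (X := Dfun phi Y - b) in *.
      assert (Hz := Hst ((X / tau, s * Y / tau) : C)).
      assert (Hlt : Re ((X / tau, s * Y / tau) : C) < 0).
      { apply Hz. apply eq_comp.
        apply (bwd a tau m phi s c d X Y); auto.
        - field; lra.
        - field; lra.
        - subst b. unfold X in *. lra. }
      unfold Re in Hlt; simpl in Hlt.
      assert (0 <= X / tau) by (apply Rdiv_le_0_compat; lra). lra. }
    destruct (Rlt_dec 0 a) as [Ha|Ha].
    + split; [exact Ha|].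
      destruct (Rlt_dec m (/ tau * Rfun (- (tau * a)) phi)) as [|Hn]; [assumption|exfalso].
      assert (Hb : 0 < tau * a) by nra.
      destruct (Cinv_spec phi (tau * a) Hphi Hb) as [Hth HD].
      destruct (Rfun_val phi (tau * a) Hphi Hb) as [HR0 [HRe _]].
      set (th := Defs.Cinv (- (tau * a)) phi) in *.
      assert (HRm : Rfun (- (tau * a)) phi <= tau * m).
      { apply Rnot_lt_le in Hn.
        apply (Rmult_le_compat_l tau) in Hn; [|lra].
        rewrite <- Rmult_assoc, Rinv_r, Rmult_1_l in Hn by lra. exact Hn. }
      destruct (core1 phi (tau * a) (tau * m) th Hphi ltac:(nra) ltac:(lra)) as [Y [HY [HX [E1 E2]]]].
      * rewrite HD. lra.
      * rewrite HD. replace (- (tau * a - tau * a)) with 0 by ring. rewrite exp_0. lra.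
      * exact (build (tau * a) Y eq_refl HX E1 E2).
    + exfalso.
      assert (Hb : tau * a <= 0) by nra.
      destruct (core1 phi (tau * a) (tau * m) 0 Hphi ltac:(nra) ltac:(lra)) as [Y [HY [HX [E1 E2]]]].
      * rewrite D_0. lra.
      * replace (0 / sin (phi - 0)) with 0 by (unfold Rdiv; ring).
        pose proof (exp_pos (- (Dfun phi 0 - tau * a))). apply Rmult_le_pos; [nra|lra].
      * exact (build (tau * a) Y eq_refl HX E1 E2).
  - intros [Ha Hlt] z Hz. destruct z as [x y].
    apply eq_comp in Hz. destruct Hz as [H1 H2].
    destruct (fwd a tau m phi s c d x y Ht Hs Hc HIm H1 H2) as [E1 E2].
    unfold Re; simpl.
    destruct (Rlt_dec x 0) as [|Hx]; [assumption|exfalso].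
    assert (Hb : 0 < tau * a) by nra.
    assert (HE : 0 < exp (- (tau * x))) by apply exp_pos.
    assert (HE1 : exp (- (tau * x)) <= 1).
    { rewrite <- exp_0. destruct (Req_dec x 0) as [->|Hne].
      - replace (- (tau * 0)) with 0 by ring. lra.
      - left. apply exp_increasing. nra. }
    pose proof (core2 phi (tau * a) (tau * x) (s * (tau * y)) (tau * m * exp (- (tau * x)))
                  Hphi Hb ltac:(apply Rnot_lt_le in Hx; nra) ltac:(apply Rmult_le_pos; nra) E1 E2).
    apply (Rmult_lt_compat_l tau) in Hlt; [|lra].
    rewrite <- Rmult_assoc, Rinv_r, Rmult_1_l in Hlt by lra.
    assert (tau * m * exp (- (tau * x)) <= tau * m) by (assert (0 < tau * m) by nra; nra). lra.
Qed.
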